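(* Let $S$ be a finite subgroup of $O(n)$. Then there exist an $S$-invariant subset $\Omega_S\subset\mathbb R^n$ which is the complement of a finite union of hyperplanes, and an open subset $U_S\subset\Omega_S$, such that $sU_S\cap U_S=\emptyset$ for all $s\in S\setminus\{I\}$ and $\bigcup_{s\in S}sU_S=\Omega_S$. *)

(* Defs.v *)
From HB Require Import structures.
From mathcomp Require Import all_boot all_order all_algebra.
From mathcomp Require Import all_classical all_reals topology normedtype.
Set Implicit Arguments. Unset Strict Implicit. Unset Printing Implicit Defensive.
Import Order.TTheory GRing.Theory Num.Theory.
Import numFieldNormedType.Exports.
Local Open Scope classical_set_scope.
Local Open Scope ring_scope.

(* Vectors of R^n are column vectors 'cV[R]_n; a matrix s acts by x |-> s *m x. *)

Definition orthogonal_mx (R : realType) (n : nat) (A : 'M[R]_n) : Prop :=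
  A *m A^T = 1%:M.

Definition finite_subgroup_On (R : realType) (n : nat) (S : seq 'M[R]_n) : Prop :=
  [/\ forall s, s \in S -> orthogonal_mx s,
      1%:M \in S,
      forall s t, s \in S -> t \in S -> s *m t \in S
    & forall s, s \in S -> s^T \in S].

Definition hyperplane (R : realType) (n : nat) (a : 'cV[R]_n) (c : R)
  : set 'cV[R]_n := [set x | (a^T *m x) 0 0 = c].

Definition complement_of_hyperplanes (R : realType) (n : nat)
  (Omega : set 'cV[R]_n) : Prop :=
  exists H : seq ('cV[R]_n * R),
    (forall h, h \in H -> h.1 != 0) /\
    Omega = ~` [set x | exists2 h, h \in H & hyperplane h.1 h.2 x].

Definition mx_image (R : realType) (n : nat) (s : 'M[R]_n) (A : set 'cV[R]_n)
  : set 'cV[R]_n := [set s *m x | x in A].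

(* Main.v *)
Require Import Defs.
From HB Require Import structures.
From mathcomp Require Import all_boot all_order all_algebra.
From mathcomp Require Import all_classical all_reals topology normedtype.
From mathcomp Require Import lra.
Import Order.TTheory GRing.Theory Num.Theory.
Import numFieldNormedType.Exports.
Local Open Scope classical_set_scope.
Local Open Scope ring_scope.
Section A.
Variables (R : realType) (n : nat).
Definition ip (a x : 'cV[R]_n) : R := (a^T *m x) 0 0.

Lemma ip_mul a (s : 'M[R]_n) x : ip a (s *m x) = ip (s^T *m a) x.
Proof. by rewrite /ip trmx_mul trmxK mulmxA. Qed.

Lemma ipBl a b x : ip (a - b) x = ip a x - ip b x.
Proof. rewrite /ip. rewrite (raddfB (@trmx R n 1)). rewrite mulmxBl. by rewrite [LHS]mxE [X in _ + X]mxE. Qed.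

Lemma cont_sum (I : Type) (r : seq I) (F : I -> 'cV[R]_n -> R) :
  (forall i, continuous (F i)) -> continuous (fun x => \sum_(i <- r) F i x).
Proof.
move=> HF; elim: r => [|i r IH].
  under eq_fun do rewrite big_nil; exact: cst_continuous.
under eq_fun do rewrite big_cons.
move=> x; apply: (@continuousD _ _ _ (F i) (fun x => \sum_(j <- r) F j x)).
  exact: HF. exact: IH.
Qed.

Lemma ip_cont a : continuous (ip a).
Proof.
have -> : ip a = fun x => \sum_(i <- index_enum 'I_n) (fun i x => a i 0 * x i 0) i x.
  apply: funext => x; rewrite /ip mxE; apply: eq_bigr => i _; by rewrite mxE.
apply: cont_sum => i x; apply: continuousM; first exact: cst_continuous.
exact: coord_continuous.
Qed.

Lemma open_list (X : eqType) (L : seq X) (P : X -> set 'cV[R]_n) :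
  (forall a, a \in L -> open (P a)) -> open [set x | forall a, a \in L -> P a x].
Proof.
elim: L => [|a L IH] HL.
  rewrite (_ : [set x | _] = setT); first exact: openT.
  by apply/seteqP; split => x //=.
rewrite (_ : [set x | _] = P a `&` [set x | forall b, b \in L -> P b x]).
  apply: openI; first by apply: HL; rewrite mem_head.
  by apply: IH => b Hb; apply: HL; rewrite in_cons Hb orbT.
apply/seteqP; split => x /=.
  by move=> H; split; [apply: H; rewrite mem_head | move=> b Hb; apply: H; rewrite in_cons Hb orbT].
by move=> [Ha H] b; rewrite in_cons => /orP[/eqP->|]//; apply: H.
Qed.

Lemma open_ipneq a : open [set x | ip a x != 0].
Proof.
have -> : [set x | ip a x != 0] = ip a @^-1` [set y | y != 0] by [].
by apply: open_comp; [move=> x _; exact: ip_cont | exact: open_neq].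
Qed.

Lemma open_ipgt a : open [set x | 0 < ip a x].
Proof.
have -> : [set x | 0 < ip a x] = ip a @^-1` [set y | 0 < y] by [].
by apply: open_comp; [move=> x _; exact: ip_cont | exact: open_gt].
Qed.
End A.
Arguments ip {R n}.
Arguments open_list {R n X}.
Section B.
Variables (R : realType) (n : nat).

Lemma nonzero_coord (c d : 'cV[R]_n) : c != 0 \/ d != 0 ->
  exists i, c i 0 != 0 \/ d i 0 != 0.
Proof.
move=> H; apply: contrapT => Hn; case: H => /eqP; apply; apply/matrixP => i j;
  rewrite (ord1 j) mxE; apply: contrapT => Hi; apply: Hn; exists i; by [left; apply/eqP|right; apply/eqP].
Qed.

Lemma step (L : seq 'M[R]_n) (v w : 'cV[R]_n) :
  (forall M, M \in L -> M *m v != 0 \/ M *m w != 0) ->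
  exists t : R, forall M, M \in L -> M *m (v + t *: w) != 0.
Proof.
move=> HL.
pose B (M : 'M[R]_n) := \sum_i `|(M *m v) i 0 / (M *m w) i 0|.
have B0 M : 0 <= B M by apply: sumr_ge0 => i _.
exists (1 + \sum_(M <- L) B M) => M ML.
set t := 1 + _.
have sum0 : 0 <= \sum_(M <- L) B M by apply: sumr_ge0 => N _; exact: B0.
have tpos : 0 < t by apply: (lt_le_trans ltr01); rewrite lerDl.
have [i Hi] := nonzero_coord _ _ (HL M ML).
apply/eqP => E.
have Ei : (M *m v) i 0 + t * (M *m w) i 0 = 0.
  by move: (congr1 (fun A : 'cV[R]_n => A i 0) E); rewrite mulmxDr -scalemxAr !mxE.
have dne : (M *m w) i 0 != 0.
  case: Hi => // /negP Hc; apply/negP => /eqP Hd; apply: Hc.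
  by move: Ei; rewrite Hd mulr0 addr0 => ->.
have teq : t = - ((M *m v) i 0 / (M *m w) i 0).
  apply: (mulIf dne); rewrite mulNr divfK //; apply/eqP; rewrite -addr_eq0 addrC.
  by apply/eqP.
have : `|t| <= B M.
  rewrite teq normrN /B (bigD1 i) //= lerDl; exact: sumr_ge0.
have : B M <= \sum_(M <- L) B M.
  rewrite (big_rem M ML) /= lerDl; apply: sumr_ge0 => N _; exact: B0.
rewrite gtr0_norm // /t => H1 H2.
have := le_trans H2 H1; move=> H; lra.
Qed.

Lemma generic (L : seq 'M[R]_n) : (forall M, M \in L -> M != 0) ->
  exists v : 'cV[R]_n, forall M, M \in L -> M *m v != 0.
Proof.
elim: L => [|M L IH] HL.
  by exists 0 => M.
have [v Hv] : exists v : 'cV[R]_n, forall M, M \in L -> M *m v != 0.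
  by apply: IH => N NL; apply: HL; rewrite in_cons NL orbT.
have [w Hw] : exists w : 'cV[R]_n, M *m w != 0.
  apply: contrapT => Hn.
  have /eqP := HL M (mem_head _ _); apply; apply/matrixP => i j.
  have H0 : M *m (delta_mx j 0 : 'cV[R]_n) = 0.
    case: (eqVneq (M *m (delta_mx j 0 : 'cV[R]_n)) (0 : 'cV[R]_n)) => // H; exfalso; apply: Hn; by exists ((delta_mx j 0 : 'cV[R]_n)).
  move: H0; rewrite -colE => /(congr1 (fun A : 'cV[R]_n => A i 0)).
  by rewrite !mxE.
have Hc : forall N, N \in M :: L -> N *m v != 0 \/ N *m w != 0.
  move=> N; rewrite in_cons => /orP[/eqP->|NL]; [by right | by left; apply: Hv].
have [t Ht] := step (M :: L) v w Hc.
by exists (v + t *: w).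
Qed.

Lemma argmax (T : eqType) (L : seq T) (f : T -> R) : L != [::] ->
  exists2 t, t \in L & forall u, u \in L -> f u <= f t.
Proof.
elim: L => [//|a L IH] _.
case: L IH => [|b L] IH.
  by exists a => [|u]; rewrite ?mem_head // inE => /eqP->.
have [t tL Ht] := IH isT.
case: (leP (f a) (f t)) => H.
  exists t; first by rewrite in_cons tL orbT.
  by move=> u; rewrite in_cons => /orP[/eqP->//|]; apply: Ht.
exists a; first exact: mem_head.
move=> u; rewrite in_cons => /orP[/eqP->//|/Ht]; move=> Hu; apply: (le_trans Hu); exact: ltW.
Qed.
End B.

Theorem lemmaA1 (R : realType) (n : nat) (S : seq 'M[R]_n) :
  finite_subgroup_On S ->
  exists (Omega U : set 'cV[R]_n),
    [/\ complement_of_hyperplanes Omega,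
        (forall s, s \in S -> mx_image s Omega = Omega),
        open U /\
        U `<=` Omega,
        (forall s, s \in S -> s != 1%:M -> mx_image s U `&` U = set0)
      & Omega = \bigcup_(s in [set s | s \in S]) mx_image s U].
Proof.
move=> [orth one mul tr].
have Hne0 : forall M, M \in [seq s - 1%:M | s <- S & s != 1%:M] -> M != 0.
  move=> M /mapP [s]; rewrite mem_filter => /andP[s1 _] ->.
  by rewrite subr_eq0.
have [v Hv] := generic R n _ Hne0.
have Hsv s : s \in S -> s != 1%:M -> s *m v != v.
  move=> sS s1.
  have := Hv (s - 1%:M) (map_f _ (_ : s \in [seq s <- S | s != 1%:M])).
  rewrite mulmxBl mul1mx subr_eq0; apply.
  by rewrite mem_filter s1 sS.
have orthS s : s \in S -> s *m s^T = 1%:M := orth s.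
have orthT s : s \in S -> s^T *m s = 1%:M.
  by move=> sS; have := orth _ (tr _ sS); rewrite /orthogonal_mx trmxK.
pose Om := [set x : 'cV[R]_n | forall t, t \in S -> forall u, u \in S ->
   t *m v != u *m v -> ip (t *m v - u *m v) x != 0].
pose U := [set x | Om x /\ forall s, s \in S -> s != 1%:M -> 0 < ip (v - s *m v) x].
have OmS s x : s \in S -> Om x -> Om (s *m x).
  move=> sS Ox t tS u uS tu; rewrite ip_mul mulmxBr !mulmxA.
  apply: Ox; [exact: mul (tr _ sS) tS | exact: mul (tr _ sS) uS |].
  apply: contra tu => /eqP E; apply/eqP.
  by have := congr1 (mulmx s) E; rewrite !mulmxA orthS // !mul1mx.
have imgOm s : s \in S -> mx_image s Om = Om.
  move=> sS; apply/seteqP; split => x.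
    by move=> [y Oy <-]; exact: OmS.
  move=> Ox; exists (s^T *m x); first exact: OmS (tr _ sS) Ox.
  by rewrite mulmxA orthS // mul1mx.
exists Om, U; split.
- exists [seq (p.1 *m v - p.2 *m v, 0) | p <- [seq (t, u) | t <- S, u <- S] & p.1 *m v != p.2 *m v].
  split.
    move=> h /mapP [p]; rewrite mem_filter => /andP [pd _] ->.
    by rewrite /= subr_eq0.
  apply/seteqP; split => x /=.
    move=> Ox [h /mapP[p]]; rewrite mem_filter => /andP[pd pm].
    move: pm pd => /allpairsP[[t u] /= [tS uS ->]] /= pd ->.
    rewrite /hyperplane /= => E.
    by move: (Ox t tS u uS pd); rewrite /ip E eqxx.
  move=> H t tS u uS tu; apply/eqP => E; apply: H.
  exists (t *m v - u *m v, 0); last exact: E.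
  apply/mapP; exists (t, u) => //.
  rewrite mem_filter tu /=; apply/allpairsP; exists (t, u) => /=.
  by split.
- move=> s sS; exact: imgOm.
- split; last by move=> x [].
  have -> : U = Om `&` [set x | forall s, s \in S -> s != 1%:M -> 0 < ip (v - s *m v) x].
    by [].
  apply: openI.
    apply: (open_list S (fun t => [set x | forall u, u \in S ->
      t *m v != u *m v -> ip (t *m v - u *m v) x != 0])) => t tS.
    apply: (open_list S (fun u => [set x |
      t *m v != u *m v -> ip (t *m v - u *m v) x != 0])) => u uS.
    case: (eqVneq (t *m v) (u *m v)) => E.
      rewrite (_ : [set x | _] = setT); first exact: openT.
      by apply/seteqP; split => x //= _; rewrite E eqxx.
    rewrite (_ : [set x | _] = [set x | ip (t *m v - u *m v) x != 0]).
      exact: open_ipneq.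
    by apply/seteqP; split => x /=; [apply | move=> ? _].
  apply: (open_list S (fun s => [set x | s != 1%:M -> 0 < ip (v - s *m v) x])) => s sS.
  case: (eqVneq s 1%:M) => E.
    rewrite (_ : [set x | _] = setT); first exact: openT.
    by apply/seteqP; split => x //= _; rewrite E eqxx.
  rewrite (_ : [set x | _] = [set x | 0 < ip (v - s *m v) x]).
    exact: open_ipgt.
  by apply/seteqP; split => x /=; [apply | move=> ? _].
- move=> s sS s1; apply/seteqP; split => x //= [[y [Oy Uy] <-] [Ox Ux]].
  have sT1 : s^T != 1%:M.
    apply: contra s1 => /eqP E; apply/eqP.
    by rewrite -(trmxK s) E trmx1.
  have H1 := Ux s sS s1.
  have H2 := Uy _ (tr _ sS) sT1.
  rewrite ip_mul mulmxBr mulmxA orthT // mul1mx !ipBl in H1.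
  rewrite ipBl in H2.
  lra.
- apply/seteqP; split.
    move=> x Ox.
    have S0 : S != [::] by move: one; case: (S).
    have [t0 t0S Ht0] := argmax R _ S (fun t => ip (t *m v) x) S0.
    exists t0 => //.
    exists (t0^T *m x); last by rewrite mulmxA orthS // mul1mx.
    split; first exact: OmS (tr _ t0S) Ox.
    move=> s sS s1.
    have H1s : 1%:M *m v != s *m v by rewrite mul1mx eq_sym Hsv.
    have Hne := OmS _ _ (tr _ t0S) Ox 1%:M one s sS H1s.
    rewrite ip_mul trmxK mulmxBr ipBl mulmxA.
    rewrite ip_mul trmxK mulmxBr ipBl mul1mx mulmxA subr_eq0 in Hne.
    rewrite subr_gt0 lt_neqAle eq_sym Hne /=.
    exact: (Ht0 (t0 *m s) (mul _ _ t0S sS)).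
  move=> x [s sS [y [Oy _] <-]].
  exact: OmS.
Qed.
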